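(* Let $n\ge 2$ and $g$ be integers with $\gcd(n,g)=1$. The permutation matrix $Q_g$ has $(1,1)$ entry $1$, so it can be written as $Q_g=\begin{pmatrix}1&\mathbf 0\\ \mathbf 0&\mathbf W\end{pmatrix}$ with $\mathbf W$ a permutation matrix of order $n-1$. Then $\mathbf W$ is a primary permutation matrix if and only if $n\nmid (g^{\ell_2}-g^{\ell_1})$ for all integers $0\le \ell_1<\ell_2\le n-2$.
   Context: For an integer $h$, $Q_h$ denotes the $n\times n$ matrix whose $(i,j)$ entry is $1$ if $j\equiv 1+(i-1)h\pmod n$ (indices taken in $\{1,\dots,n\}$) and $0$ otherwise; it is the $h$-circulant matrix with first row $(1,0,\dots,0)$, where an $h$-circulant matrix is one whose each row is the preceding row cyclically shifted $h$ places to the right. A permutation matrix of order $m$ is called primary if its associated permutation is a single cycle of length $m$. *)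

(* Defs.v *)
From mathcomp Require Import all_boot all_order all_algebra all_fingroup.
Set Implicit Arguments. Unset Strict Implicit. Unset Printing Implicit Defensive.
Import GRing.Theory Num.Theory.
Local Open Scope ring_scope.

(* The paper's 1-based condition  j == 1 + (i-1) h  (mod n)  becomes,
   with i = i'+1, j = j'+1, the 0-based condition  j' == i' * h (mod n). *)
Definition Qmx (n : nat) (h : int) : 'M[int]_n :=
  \matrix_(i < n, j < n) ((n%:Z %| (j%:Z - i%:Z * h))%Z)%:R.

Definition to_blocks (n : nat) (Hn : (0 < n)%N) (A : 'M[int]_n)
  : 'M[int]_(1 + n.-1) :=
  castmx (esym (prednK Hn), esym (prednK Hn)) A.

Definition Wblock (n : nat) (Hn : (0 < n)%N) (h : int) : 'M[int]_(n.-1) :=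
  drsubmx (to_blocks Hn (Qmx n h)).

Definition primary (m : nat) (W : 'M[int]_m) : Prop :=
  exists s : 'S_m, W = perm_mx s /\ exists i : 'I_m, porbit s i = [set: 'I_m].

(* Main.v *)
Require Import Defs.
From mathcomp Require Import all_boot all_order all_algebra all_fingroup.
From mathcomp Require Import cyclic.
From mathcomp Require Import zify.
Import GRing.Theory Num.Theory.
Local Open Scope ring_scope.

Lemma dvdz_modE (n : nat) (x y : int) :
  (n%:Z %| x - y)%Z = ((x %% n)%Z == (y %% n)%Z).
Proof. by rewrite -eqz_mod_dvd. Qed.

Lemma absmod (n : nat) (g : int) : (0 < n)%N ->
  ((`|(g %% n)%Z|%N)%:Z = (g %% n)%Z).
Proof.
move=> n0; rewrite gez0_abs // modz_ge0 //; by case: n n0.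
Qed.

Lemma dvd_lin (n : nat) (g : int) (x y : nat) : (0 < n)%N ->
  (n%:Z %| x%:Z - y%:Z * g)%Z = (x == y * `|(g %% n)%Z| %[mod n])%N.
Proof.
move=> n0; move: (absmod n g n0); set a := absz _ => ha.
rewrite dvdz_modE -modzMmr -ha -PoszM !modz_nat.
by apply/eqP/eqP => [[]|->].
Qed.

Lemma dvd_pow (n : nat) (g : int) (l1 l2 : nat) : (0 < n)%N ->
  (n%:Z %| g ^+ l2 - g ^+ l1)%Z =
  (`|(g %% n)%Z| ^ l2 == `|(g %% n)%Z| ^ l1 %[mod n])%N.
Proof.
move=> n0; move: (absmod n g n0); set a := absz _ => ha.
rewrite dvdz_modE -modzXm -[(g ^+ l1 %% n)%Z]modzXm -ha.
rewrite -!natz -!natrX !natz !modz_nat.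
by apply/eqP/eqP => [[]|->].
Qed.

Lemma cop_nat (n : nat) (g : int) : (0 < n)%N -> coprimez n%:Z g ->
  coprime n `|(g %% n)%Z|.
Proof.
move=> n0; rewrite /coprimez -gcdz_modr => H.
by rewrite /coprime; move: H; rewrite /gcdz.
Qed.

Lemma mod_cancel (N a x y : nat) : coprime N a ->
  (x * a == y * a %[mod N])%N = (x == y %[mod N])%N.
Proof.
move=> ca.
wlog le: x y / (y <= x)%N.
  move=> H; case: (leqP y x) => [|/ltnW] h; first exact: H.
  by rewrite eq_sym H // eq_sym.
rewrite !eqn_mod_dvd ?leq_mul2r ?le ?orbT // -mulnBl Gauss_dvdl //.
Qed.

Theorem mainTheorem2 (n : nat) (g : int) (hn : (2 <= n)%N)
    (cop : coprimez n%:Z g) :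
  to_blocks (ltnW hn) (Qmx n g) = block_mx 1 0 0 (Wblock (ltnW hn) g)
  /\ (primary (Wblock (ltnW hn) g) <->
      (forall l1 l2 : nat, (l1 < l2 <= n - 2)%N ->
         ~~ (n%:Z %| g ^+ l2 - g ^+ l1)%Z)).
Proof.
case: n hn cop => [|[|m]] // hn cop.
have n0 : (0 < m.+2)%N by [].
have ca : coprime m.+2 `|(g %% m.+2)%Z| := cop_nat _ _ n0 cop.
move: ca; set a := `|(g %% m.+2)%Z|%N => ca.
have HB : forall i j : 'I_(1 + m.+1), to_blocks (ltnW hn) (Qmx m.+2 g) i j
    = (j == i * a %[mod m.+2])%N%:R.
  by move=> i j; rewrite /to_blocks castmxE !mxE /= dvd_lin.
have nz : forall k, (0 < k < m.+2)%N -> (k * a %% m.+2 != 0)%N.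
  move=> k /andP[k0 kN]; apply/negP; rewrite -/(dvdn _ _) Gauss_dvdl //.
  by move/dvdn_leq => /(_ k0); rewrite leqNgt kN.
split.
  rewrite -[LHS]submxK /Wblock; congr block_mx; apply/matrixP => i j;
    rewrite !mxE HB /=.
  - by rewrite !ord1.
  - have hj : (1 + j < m.+2)%N by rewrite add1n ltnS ltn_ord.
    by rewrite ord1 /= mul0n mod0n modn_small.
  - rewrite ord1 /= mod0n.
    case: eqP => // /esym /eqP h; exfalso; move: h; apply/negP/nz.
    by rewrite add1n /= ltnS (ltn_ord i).
have sP : forall k : 'I_m.+1, (((k.+1 * a) %% m.+2).-1 < m.+1)%N.
  by move=> k; have := ltn_pmod (k.+1 * a) n0; lia.
pose f (k : 'I_m.+1) : 'I_m.+1 := Ordinal (sP k).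
have fE : forall k, ((f k : nat).+1 = (k.+1 * a) %% m.+2)%N.
  move=> k; rewrite /= prednK // lt0n; apply: nz; by rewrite /= ltnS ltn_ord.
have finj : injective f.
  move=> k l /(congr1 (fun x : 'I_m.+1 => (val x).+1)) /=.
  have hk : (k.+1 < m.+2)%N by rewrite ltnS ltn_ord.
  have hl : (l.+1 < m.+2)%N by rewrite ltnS ltn_ord.
  rewrite -!/(f _ : nat) !fE => /eqP; rewrite mod_cancel // (modn_small hk)
    (modn_small hl) => /eqP [] /val_inj.
  done.
pose s := perm finj.
have sE : forall k, ((s k : nat).+1 = (k.+1 * a) %% m.+2)%N.
  by move=> k; rewrite permE fE.
have sX : forall l k, (((s ^+ l)%g k : nat).+1 = (k.+1 * a ^ l) %% m.+2)%N.
  elim=> [|l IH] k; first by rewrite expg0 perm1 muln1 modn_small // ltnS ltn_ord.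
  by rewrite expgSr permM sE IH modnMml expnSr mulnA.
have Wperm : Wblock (ltnW hn) g = perm_mx s.
  apply/matrixP => k l; rewrite /Wblock !mxE HB /=.
  have hl : (1 + l < m.+2)%N by rewrite add1n ltnS (ltn_ord l).
  rewrite (modn_small hl) !add1n -(sE k); congr (_ %:R).
  by rewrite eq_sym eqSS.
have sU : forall s' : {perm 'I_m.+1},
    perm_mx s = perm_mx s' :> 'M[int]_m.+1 -> s' = s.
  move=> s' e; apply/permP => k.
  have := congr1 (fun M : 'M[int]_m.+1 => M k (s k)) e; rewrite /= !mxE eqxx.
  by case: eqP => // _ /eqP; rewrite oner_eq0.
have H' : forall l1 l2 : nat, (l1 < l2 <= m)%N ->
    ~~ (m.+2%:Z %| g ^+ l2 - g ^+ l1)%Z =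
    ~~ (a ^ l2 == a ^ l1 %[mod m.+2])%N.
  by move=> l1 l2 _; rewrite dvd_pow.
have m2 : (m.+2 - 2 = m)%N by lia.
rewrite Wperm m2; split.
  case=> s' [/sU -> [i hi]] l1 l2 hl; rewrite H' //; apply/negP => he.
  move: hl => /andP [l12 l2m].
  pose d := (l2 - l1)%N.
  have d0 : (0 < d)%N by rewrite subn_gt0.
  have ad : (a ^ d == 1 %[mod m.+2])%N.
    rewrite -(mod_cancel _ _ _ _ (coprimeXr l1 ca)) mul1n mulnC -expnD subnKC //.
    exact: ltnW.
  have sd : (s ^+ d = 1)%g.
    apply/permP => k; rewrite perm1; apply/val_inj/succn_inj.
    have hk : (k.+1 < m.+2)%N by rewrite ltnS ltn_ord.
    by rewrite sX -modnMmr (eqP ad) modnMmr muln1 modn_small.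
  have : (#[s]%g %| d)%N by rewrite order_dvdn sd.
  move/dvdn_leq => /(_ d0) hd.
  have : (#|porbit s i| <= #|<[s]>%g|)%N by rewrite porbit.unlock; exact: leq_imset_card.
  rewrite hi cardsT card_ord -/(order s) => hc.
  have : (d <= m)%N by rewrite /d; apply: leq_trans (leq_subr _ _) l2m.
  move: hd hc; clear; move=> hd hc hdm.
  have := leq_trans hc (leq_trans hd hdm); by rewrite ltnn.
move=> H; exists s; split => //; exists ord0.
pose h (l : 'I_m.+1) := (s ^+ l)%g ord0.
have hinj : injective h.
  move=> l1 l2 /(congr1 (fun x : 'I_m.+1 => (val x).+1)); rewrite /h !sX !mul1n.
  move=> /eqP e.
  case: (ltngtP l1 l2) => c; last exact: val_inj.
  - have hl : (l1 < l2 <= m)%N by rewrite c -ltnS ltn_ord.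
    by have := H l1 l2 hl; rewrite H' // eq_sym e.
  - have hl : (l2 < l1 <= m)%N by rewrite c -ltnS ltn_ord.
    by have := H l2 l1 hl; rewrite H' // e.
apply/eqP; rewrite eqEcard subsetT cardsT card_ord.
have hc : #|h @: [set: 'I_m.+1]| = m.+1 by rewrite card_imset // cardsT card_ord.
rewrite -[X in (X <= _)%N]hc.
apply: subset_leq_card; apply/subsetP => x /imsetP [l _ ->]; exact: mem_porbit.
Qed.
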